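(* For every natural number $n\ge 2$, the simplicial complex ${\rm Bd}(\mathrm{DG}_n)$ collapses onto $\Delta(\bar\Pi_n)$ (where a simplex of $\mathrm{DG}_n$ is identified with the set partition of $[n]$ into the connected components of the corresponding graph).
   Context: $\mathrm{DG}_n$ is the simplicial complex whose vertices are all pairs $(i,j)$ with $1\le i<j\le n$ (possible edges of a graph on vertex set $[n]=\{1,\dots,n\}$) and whose simplices are the nonempty sets of such edges forming a graph on $[n]$ with at least two connected components. $\Pi_n$ is the partition lattice of all set partitions of $[n]$ ordered by refinement, $\bar\Pi_n=\Pi_n\setminus\{\hat0,\hat1\}$. ${\rm Bd}$ denotes barycentric subdivision and $\Delta(Q)$ the order complex of a poset $Q$ (simplices = nonempty chains). *)

(* Defs.v *)
From mathcomp Require Import all_boot.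
Set Implicit Arguments. Unset Strict Implicit. Unset Printing Implicit Defensive.

(* A (finite abstract) simplicial complex on a finite vertex type V is
   represented by its set of (nonempty) faces. *)

Definition elem_collapse (V : finType) (K K' : {set {set V}}) : Prop :=
  exists s t : {set V},
    [/\ s \in K, t \in K, s \proper t, #|t| = #|s|.+1
      & (forall r, r \in K -> s \subset r -> r = s \/ r = t)] /\
    K' = K :\: [set s; t].

Inductive collapses (V : finType) : {set {set V}} -> {set {set V}} -> Prop :=
| collapses_refl K : collapses K K
| collapses_step K K' L : elem_collapse K K' -> collapses K' L -> collapses K L.

Definition is_chain (T : finType) (le : rel T) (c : {set T}) : bool :=
  [forall x in c, forall y in c, le x y || le y x].

Definition Bd (V : finType) (K : {set {set V}}) : {set {set {set V}}} :=
  [set c : {set {set V}} | [&& c \subset K, c != set0 &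
                              is_chain (fun x y : {set V} => x \subset y) c]].

Definition edgeT (n : nat) := ('I_n * 'I_n)%type.

Definition all_edges (n : nat) : {set edgeT n} := [set e : edgeT n | e.1 < e.2].

Definition adj (n : nat) (G : {set edgeT n}) : rel 'I_n :=
  fun x y => ((x, y) \in G) || ((y, x) \in G).

Definition comp_of (n : nat) (G : {set edgeT n}) (x : 'I_n) : {set 'I_n} :=
  [set y | connect (adj G) x y].

Definition comps (n : nat) (G : {set edgeT n}) : {set {set 'I_n}} :=
  [set comp_of G x | x : 'I_n].

Definition DG (n : nat) : {set {set edgeT n}} :=
  [set G : {set edgeT n} | [&& G \subset all_edges n, G != set0 & 2 <= #|comps G|]].

Definition is_setpart (n : nat) (P : {set {set 'I_n}}) : bool :=
  partition P [set: 'I_n].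

Definition part_bot (n : nat) : {set {set 'I_n}} := [set [set i] | i : 'I_n].
Definition part_top (n : nat) : {set {set 'I_n}} := [set [set: 'I_n]].

Definition refines (n : nat) (P Q : {set {set 'I_n}}) : bool :=
  [forall A in P, exists B in Q, A \subset B].

Definition Pibar (n : nat) : {set {set {set 'I_n}}} :=
  [set P | [&& is_setpart P, P != part_bot n & P != part_top n]].

Definition DeltaPibar (n : nat) : {set {set {set {set 'I_n}}}} :=
  [set c : {set {set {set 'I_n}}} | [&& c \subset Pibar n, c != set0 & is_chain (@refines n) c]].

(* This is the
   simplex of DG_n whose component partition is P, and which is used to
   identify Delta(\bar Pi_n) with a subcomplex of Bd(DG_n). *)
Definition part_graph (n : nat) (P : {set {set 'I_n}}) : {set edgeT n} :=
  [set e : edgeT n | (e.1 < e.2) && [exists B in P, (e.1 \in B) && (e.2 \in B)]].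

Definition DeltaPibar_in_BdDG (n : nat) : {set {set {set edgeT n}}} :=
  [set @part_graph n @: c | c : {set {set {set 'I_n}}} in DeltaPibar n].

(* Main.v *)
Require Import Defs.
From mathcomp Require Import all_boot.
Set Implicit Arguments. Unset Strict Implicit. Unset Printing Implicit Defensive.

Lemma collapses_trans (V : finType) (K M L : {set {set V}}) :
  collapses K M -> collapses M L -> collapses K L.
Proof.
elim=> [//|K1 K' M1 H _ IH] HL; apply: collapses_step H (IH HL).
Qed.

Section Cone.
Variable T : finType.
Implicit Types S : {set {set T}}.

Lemma Bd_cone S (x y : {set T}) (sig : {set {set T}}) :
  y \in S -> x \subset y ->
  (forall z, z \in S -> x \proper z -> y \subset z) ->
  sig \in Bd S -> x \in sig -> y |: sig \in Bd S.
Proof.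
move=> yS xy hz; rewrite !inE => /and3P [sub ne ch] xs.
apply/and3P; split.
- by rewrite subUset sub1set yS sub.
- by apply/set0Pn; exists y; rewrite setU11.
have cy : forall b, b \in sig -> (y \subset b) || (b \subset y).
  move=> b bs.
  have /orP[xb|bx] := (forall_inP (forall_inP ch x xs) b bs).
    2: by rewrite (subset_trans bx xy) orbT.
  have [ebx|nbx] := eqVneq x b; first by rewrite -ebx xy orbT.
  by rewrite hz // ?properEneq ?nbx ?xb //; apply: (subsetP sub).
apply/forall_inP=> a /setU1P [->|Ha]; apply/forall_inP => b /setU1P [->|Hb].
- by rewrite subxx.
- exact: cy.
- by rewrite orbC; exact: cy.
- exact: (forall_inP (forall_inP ch a Ha) b Hb).
Qed.

Definition KR S (x y : {set T}) (R : {set {set {set T}}}) :=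
  [set tau in Bd S | (x \notin tau) || (tau :\ y \in R)].

Lemma KR_in S (x y : {set T}) R tau :
  (tau \in KR S x y R) = (tau \in Bd S) && ((x \notin tau) || (tau :\ y \in R)).
Proof. by rewrite /KR; move: (Bd S) => B; rewrite in_set. Qed.

Lemma cone_collapse S (x y : {set T}) :
  y \in S -> x \proper y ->
  (forall z, z \in S -> x \proper z -> y \subset z) ->
  forall R : {set {set {set T}}}, R \subset [set s in Bd S | (x \in s) && (y \notin s)] ->
  collapses (KR S x y R) (KR S x y set0).
Proof.
move=> yS xy hz.
have xy' : x \subset y by apply: proper_sub.
have nxy : x != y by move: xy; rewrite properEneq => /andP[].
move=> R; move: {2}#|R| (erefl #|R|) => k; elim: k R => [|k IH] R cR RA.
  by move/eqP: cR; rewrite cards_eq0 => /eqP ->; constructor.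
have [s [sR smax]] : exists s, s \in R /\ forall r, r \in R -> #|r| <= #|s|.
  have : R != set0 by rewrite -card_gt0 cR.
  case/set0Pn=> s0 s0R.
  case: (@arg_maxnP _ s0 (mem R) (fun r => #|r|) s0R) => s sR smax.
  by exists s.
have := subsetP RA s sR; rewrite inE => /and3P [sBd xs ys].
apply: (@collapses_step _ _ (KR S x y (R :\ s))); last first.
  by apply: IH => //; [rewrite (cardsD1 s R) sR in cR; case: cR |
                       exact: subset_trans (subD1set _ _) RA].
have tBd := @Bd_cone S x y s yS xy' hz sBd xs.
exists s, (y |: s); split; last first.
  apply/setP=> tau; rewrite in_setD in_set2 !KR_in.
  case tB: (tau \in Bd S) => /=; last by rewrite !andbF.
  have key : (tau :\ y == s) = (tau == s) || (tau == y |: s).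
    apply/eqP/orP.
      move=> e; case yt: (y \in tau).
        by right; rewrite -e setD1K.
      by left; apply/eqP/setP=> z; rewrite -e in_setD1; case: eqP => // ->; rewrite yt.
    case=> /eqP ->; last by rewrite setU1K.
    by apply/setP=>z; rewrite in_setD1; case: eqP => // ->; rewrite (negbTE ys).
  have [xt|xt] /= := boolP (x \in tau).
    by rewrite in_setD1 key.
  rewrite andbT; apply/esym/negP => /orP [] /eqP et; move: xt; rewrite et.
    by rewrite xs.
  by rewrite in_setU1 xs orbT.
split.
- rewrite KR_in sBd xs /=.
  have -> : s :\ y = s.
    by apply/setP=>z; rewrite in_setD1; case: eqP => // ->; rewrite (negbTE ys).
  by rewrite sR.
- by rewrite KR_in tBd /= setU1K // sR orbT.
- by rewrite properEneq subsetUr andbT; apply/eqP=> e; move: ys; rewrite e setU11.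
- by rewrite cardsU1 ys.
move=> r; rewrite KR_in => /andP [rB]; move=> hr sr.
have xr : x \in r by apply: (subsetP sr).
rewrite xr /= in hr.
have sry : s \subset r :\ y by rewrite subsetD1 sr ys.
have : s == r :\ y by rewrite eqEcard sry smax.
move/eqP=> e.
have [yr|yr] := boolP (y \in r).
  by right; rewrite e setD1K.
left; rewrite e; apply/setP=> z; rewrite in_setD1; case: eqP => // ->.
by rewrite (negbTE yr).
Qed.

Lemma remove_vertex S (x y : {set T}) :
  x \in S -> y \in S -> x \proper y ->
  (forall z, z \in S -> x \proper z -> y \subset z) ->
  collapses (Bd S) (Bd (S :\ x)).
Proof.
move=> xS yS xy hz.
have xy' : x \subset y by apply: proper_sub.
have nxy : x != y by move: xy; rewrite properEneq => /andP[].
have E1 : KR S x y [set s in Bd S | (x \in s) && (y \notin s)] = Bd S.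
  apply/setP=> tau; rewrite KR_in; case tB: (tau \in Bd S) => //=.
  have [xt|//] /= := boolP (x \in tau).
  rewrite in_set !in_setD1 eqxx nxy xt /= andbT.
  move: tB; rewrite /Bd !in_set => /and3P [s ne ch].
  rewrite (subset_trans (subD1set _ _) s) /=; apply/andP; split.
    by apply/set0Pn; exists x; rewrite in_setD1 nxy xt.
  apply/forall_inP=> a /setD1P[_ Ha]; apply/forall_inP=> b /setD1P[_ Hb].
  exact: (forall_inP (forall_inP ch a Ha) b Hb).
have E2 : KR S x y set0 = Bd (S :\ x).
  apply/setP=> tau; rewrite KR_in in_set0 orbF /Bd !in_set.
  apply/idP/idP.
    case/andP=> /and3P [s ne ch] xt; rewrite ne ch !andbT.
    by apply/subsetP=> z zt; rewrite in_setD1 (subsetP s) // andbT;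
       apply/eqP=> e; move: xt; rewrite -e zt.
  case/and3P=> s ne ch; rewrite ne ch (subset_trans s (subD1set _ _)) /=.
  by apply/negP=> xt; move: (subsetP s x xt); rewrite setD11.
rewrite -E1 -E2; exact: cone_collapse.
Qed.

Lemma collapse_closure S (L : {set {set T}}) (cl : {set T} -> {set T}) :
  L \subset S -> (forall x, x \in S -> cl x \in L) ->
  (forall x, x \in S -> x \subset cl x) ->
  (forall x H, x \in S -> H \in L -> x \subset H -> cl x \subset H) ->
  collapses (Bd S) (Bd L).
Proof.
move=> LS clL xcl clmin.
move: {2}#|S :\: L| (erefl #|S :\: L|) => k.
elim: k S LS clL xcl clmin => [|k IH] S LS clL xcl clmin cS.
  move/eqP: cS; rewrite cards_eq0 setD_eq0 => SL.
  have -> : S = L by apply/eqP; rewrite eqEsubset SL LS.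
  constructor.
have : S :\: L != set0 by rewrite -card_gt0 cS.
case/set0Pn=> x0 x0D.
case: (@arg_maxnP _ x0 (mem (S :\: L)) (fun r => #|r|) x0D) => x /setDP [xS xL] xmax.
have clS : cl x \in S by apply: (subsetP LS); apply: clL.
have xy : x \proper cl x.
  rewrite properEneq xcl // andbT; apply/eqP=> e; move: xL; rewrite {1}e clL //.
apply: (collapses_trans (remove_vertex xS clS xy _)).
  move=> z zS xz; apply: clmin => //; last exact: proper_sub.
  apply/negPn/negP=> zL.
  have h : z \in S :\: L by rewrite in_setD zL zS.
  have hh : #|z| <= #|x| := xmax z h.
  by rewrite leqNgt proper_card in hh.
apply: IH.
- by apply/subsetP=> z zL; rewrite in_setD1 (subsetP LS) // andbT;
     apply/eqP=> e; move: xL; rewrite -e zL.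
- by move=> z /setD1P [_ ?]; apply: clL.
- by move=> z /setD1P [_ ?]; apply: xcl.
- by move=> z H /setD1P [_ ?]; apply: clmin.
- have : S :\: L = x |: ((S :\ x) :\: L).
    apply/setP=> z; rewrite !inE; case: eqP => [->|//]; by rewrite xL xS.
  move=> e; move: cS; rewrite e cardsU1 in_setD setD11 andbF /= add1n.
  by case.
Qed.
End Cone.

Section Conc.
Variable n : nat.
Implicit Types (G H : {set edgeT n}) (P Q : {set {set 'I_n}}).

Lemma adj_sym G : symmetric (adj G).
Proof. by move=> x y; rewrite /adj orbC. Qed.

Lemma csym G : connect_sym (adj G).
Proof. exact: sym_connect_sym (adj_sym G). Qed.

Lemma comp_in G a : comp_of G a \in comps G.
Proof. by apply: imset_f. Qed.

Lemma comp_self G a : a \in comp_of G a.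
Proof. by rewrite inE connect0. Qed.

Lemma comps_partition G : partition (comps G) [set: 'I_n].
Proof.
apply/and3P; split.
- apply/eqP/setP=> z; rewrite in_setT; apply/bigcupP; exists (comp_of G z).
    exact: comp_in.
  exact: comp_self.
- apply/trivIsetP => A B /imsetP[a _ ->] /imsetP[b _ ->] neq.
  rewrite -setI_eq0; apply/eqP/setP => z; rewrite !inE; apply/negP => /andP[az bz].
  apply: (negP neq); apply/eqP/setP=> w.
  by rewrite !inE (same_connect (csym G) az) (same_connect (csym G) bz).
- apply/imsetP => -[a _ e]; have := comp_self G a; by rewrite -e inE.
Qed.

Lemma adj_sub G H a b : G \subset H -> connect (adj G) a b -> connect (adj H) a b.
Proof.
move=> GH; apply: connect_sub => u v /orP[h|h]; apply: connect1;
by rewrite /adj (subsetP GH _ h) ?orbT.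
Qed.

Lemma adj_pg P B u v : B \in P -> u \in B -> v \in B -> u != v ->
  adj (part_graph P) u v.
Proof.
move=> BP uB vB nuv.
have ex1 : [exists B in P, (u \in B) && (v \in B)].
  by apply/exists_inP; exists B => //; rewrite uB vB.
have ex2 : [exists B in P, (v \in B) && (u \in B)].
  by apply/exists_inP; exists B => //; rewrite uB vB.
rewrite /adj !in_set /=.
case: (ltngtP u v) => h.
- by rewrite ex1.
- by rewrite ex2.
- by move: nuv; rewrite (val_inj h) eqxx.
Qed.

Lemma adj_pg_inv P u v : adj (part_graph P) u v ->
  exists2 B, B \in P & (u \in B) && (v \in B).
Proof.
rewrite /adj !in_set /= => /orP[] /andP[_ /exists_inP[B BP h]]; exists B => //.
by rewrite andbC.
Qed.

Lemma connect_pg P : is_setpart P -> forall a b,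
  connect (adj (part_graph P)) a b = (b \in pblock P a).
Proof.
move=> hP a b; case/and3P: hP => /eqP cP tP _.
have cov : forall x, x \in cover P by move=> x; rewrite cP in_setT.
apply/idP/idP.
- move=> c.
  have cl : closed (adj (part_graph P)) (pblock P a).
    move=> u v /adj_pg_inv [B BP /andP[uB vB]].
    by rewrite -!eq_pblock // (def_pblock tP BP uB) (def_pblock tP BP vB).
  by rewrite -(closed_connect cl c) mem_pblock.
- move=> bp; have [->|nab] := eqVneq a b; first exact: connect0.
  apply: connect1; apply: (@adj_pg P (pblock P a)) => //.
    exact: pblock_mem.
  by rewrite mem_pblock.
Qed.

Lemma comp_pg P a : is_setpart P -> comp_of (part_graph P) a = pblock P a.
Proof. by move=> hP; apply/setP=> b; rewrite inE connect_pg. Qed.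

Lemma comps_pg P : is_setpart P -> comps (part_graph P) = P.
Proof.
move=> hP; have hP' := hP; case/and3P: hP' => /eqP cP tP n0P.
apply/setP=> B; apply/imsetP/idP.
- case=> a _ ->; rewrite comp_pg //; apply: pblock_mem; by rewrite cP in_setT.
- move=> BP; have : B != set0 by apply: contraNneq n0P => <-.
  case/set0Pn=> a aB; exists a => //; rewrite comp_pg //.
  by rewrite (def_pblock tP BP aB).
Qed.

Lemma pg_mono P Q : refines P Q -> part_graph P \subset part_graph Q.
Proof.
move=> /forall_inP rPQ; apply/subsetP=> e; rewrite !in_set => /andP[lt /exists_inP[B BP /andP[h1 h2]]].
rewrite lt /=; have /exists_inP[B' B'Q sBB'] := rPQ B BP.
by apply/exists_inP; exists B' => //; rewrite (subsetP sBB' _ h1) (subsetP sBB' _ h2).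
Qed.

Lemma pg_refl P Q : is_setpart P -> is_setpart Q ->
  part_graph P \subset part_graph Q -> refines P Q.
Proof.
move=> hP hQ sPQ; have hP' := hP; case/and3P: hP' => /eqP cP tP n0P.
have hQ' := hQ; case/and3P: hQ' => /eqP cQ tQ n0Q.
apply/forall_inP=> A AP.
have : A != set0 by apply: contraNneq n0P => <-.
case/set0Pn=> a aA.
apply/exists_inP; exists (pblock Q a); first by apply: pblock_mem; rewrite cQ in_setT.
apply/subsetP=> a' a'A; rewrite -connect_pg //; apply: adj_sub sPQ _.
by rewrite connect_pg // (def_pblock tP AP aA).
Qed.

Lemma setpart_ne P (x0 : 'I_n) : is_setpart P -> P != set0.
Proof.
case/and3P=> /eqP cP _ _; apply/set0Pn; exists (pblock P x0).
by apply: pblock_mem; rewrite cP in_setT.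
Qed.

Lemma pg_DG P (x0 : 'I_n) : P \in Pibar n -> part_graph P \in DG n.
Proof.
rewrite in_set => /and3P [hP nbot ntop].
have hP' := hP; case/and3P: hP' => /eqP cP tP n0P.
rewrite in_set; apply/and3P; split.
- by apply/subsetP=> e; rewrite !in_set => /andP[].
- apply: contraNneq nbot => e0; apply/eqP.
  have sing : forall B u v, B \in P -> u \in B -> v \in B -> u = v.
    move=> B u v BP uB vB; apply/eqP/negPn/negP => nuv.
    have := adj_pg BP uB vB nuv.
    by rewrite /adj e0 !in_set0.
  apply/setP=> B; apply/idP/imsetP.
  + move=> BP; have : B != set0 by apply: contraNneq n0P => <-.
    case/set0Pn=> a aB; exists a => //; apply/setP=> z; rewrite in_set1.
    apply/idP/eqP => [zB|->//]; exact: sing BP zB aB.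
  + case=> a _ ->.
    have pa : pblock P a \in P by apply: pblock_mem; rewrite cP in_setT.
    have apa : a \in pblock P a by rewrite mem_pblock cP in_setT.
    have -> : [set a] = pblock P a.
      apply/setP=> z; rewrite in_set1; apply/eqP/idP => [->//|zB].
      exact: sing pa zB apa.
    done.
- rewrite comps_pg //; rewrite ltnNge; apply/negP => h.
  have : #|P| == 1.
    by rewrite eqn_leq h card_gt0 (setpart_ne x0 hP).
  case/cards1P=> B eB; move: ntop; rewrite /part_top eB.
  by move: cP; rewrite eB cover1 => ->; rewrite eqxx.
Qed.

Lemma comps_Pibar G : G \in DG n -> comps G \in Pibar n.
Proof.
rewrite in_set => /and3P [Gsub Gne Gc].
rewrite in_set; apply/and3P; split.
- exact: comps_partition.
- apply/eqP=> eb.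
  case/set0Pn: Gne => -[u v] uvG.
  have := subsetP Gsub _ uvG; rewrite in_set /= => uv.
  have := comp_in G u; rewrite eb => /imsetP [i _ ei].
  have uin := comp_self G u.
  have vin : v \in comp_of G u by rewrite inE connect1 // /adj uvG.
  move: uin vin; rewrite ei !in_set1 => /eqP e1 /eqP e2.
  by move: uv; rewrite e1 e2 ltnn.
- apply/eqP=> et; move: Gc; rewrite et /part_top cards1.
  done.
Qed.

Lemma G_sub_cl G : G \subset all_edges n -> G \subset part_graph (comps G).
Proof.
move=> Gs; apply/subsetP=> -[u v] uvG.
have := subsetP Gs _ uvG; rewrite !in_set /= => ->.
apply/exists_inP; exists (comp_of G u); first exact: comp_in.
by rewrite comp_self inE connect1 // /adj uvG.
Qed.

Lemma cl_min G Q : is_setpart Q -> G \subset part_graph Q ->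
  part_graph (comps G) \subset part_graph Q.
Proof.
move=> hQ GQ; have hQ' := hQ; case/and3P: hQ' => /eqP cQ tQ n0Q.
apply/subsetP=> -[u v]; rewrite !in_set /= => /andP[uv /exists_inP[B /imsetP[z _ ->]]].
rewrite !inE => /andP[zu zv]; rewrite uv /=.
have cuv : connect (adj G) u v.
  by rewrite -(same_connect (csym G) zu).
have := adj_sub GQ cuv; rewrite connect_pg // => vp.
apply/exists_inP; exists (pblock Q u); first by apply: pblock_mem; rewrite cQ in_setT.
by rewrite vp mem_pblock cQ in_setT.
Qed.

End Conc.

Lemma Delta_eq (n : nat) :
  DeltaPibar_in_BdDG n = Bd (part_graph (n:=n) @: Pibar n).
Proof.
apply/setP => d; apply/imsetP/idP.
- case=> c; rewrite in_set => /and3P [cP cne cch] ->.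
  rewrite /Bd in_set; apply/and3P; split.
  + exact: imsetS.
  + by rewrite imset_eq0.
  + apply/forall_inP => _ /imsetP[P Pc ->]; apply/forall_inP => _ /imsetP[Q Qc ->].
    by case/orP: (forall_inP (forall_inP cch P Pc) Q Qc) => h;
       rewrite (pg_mono h) ?orbT.
- rewrite /Bd in_set => /and3P [dL dne dch].
  exists [set P in Pibar n | part_graph P \in d].
    rewrite in_set; apply/and3P; split.
    + by apply/subsetP=> P; rewrite in_set => /andP[].
    + case/set0Pn: dne => H Hd; have := subsetP dL _ Hd.
      case/imsetP=> P PP eH; apply/set0Pn; exists P; by rewrite in_set PP -eH Hd.
    + apply/forall_inP=> P; rewrite in_set => /andP[PP Pd].
      apply/forall_inP=> Q; rewrite in_set => /andP[QP Qd].
      move: PP QP; rewrite !in_set => /and3P[hP _ _] /and3P[hQ _ _].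
      by case/orP: (forall_inP (forall_inP dch _ Pd) _ Qd) => h;
         rewrite (pg_refl _ _ h) ?orbT.
  apply/setP=> H; apply/idP/imsetP.
  + move=> Hd; have := subsetP dL _ Hd; case/imsetP=> P PP eH.
    by exists P => //; rewrite in_set PP -eH Hd.
  + by case=> P; rewrite in_set => /andP[_ h] ->.
Qed.

Theorem mainTheorem4 (n : nat) (hn : 2 <= n) :
  collapses (Bd (DG n)) (DeltaPibar_in_BdDG n).
Proof.
have n0 : 0 < n by apply: leq_trans hn.
pose x0 : 'I_n := Ordinal n0.
rewrite Delta_eq.
apply: (@collapse_closure _ (DG n) _ (fun G => part_graph (comps G))).
- by apply/subsetP=> H /imsetP[P PP ->]; apply: pg_DG x0 _.
- by move=> G GD; apply: imset_f; apply: comps_Pibar.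
- move=> G; rewrite in_set => /and3P [Gs _ _]; exact: G_sub_cl.
- move=> G H GD /imsetP[Q QP ->] GQ; apply: cl_min => //.
  by move: QP; rewrite in_set => /and3P[].
Qed.
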